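(* Let $c \geq 1$ and let $\Gamma \subset \mathbb{P}^c$ be a finite set of $d \geq 2c+1$ points in linear semi-uniform position. Then there exists a subset $\Gamma' \subset \Gamma$ of $2c+1$ points which spans $\mathbb{P}^c$ and is $3$-regular.
   Context: The ground field is algebraically closed of arbitrary characteristic. A finite set $\Gamma \subset \mathbb{P}^c$ is in linear semi-uniform position if it spans $\mathbb{P}^c$ and there are integers $\nu(i,\Gamma)$, $0 \leq i \leq c$, such that every $i$-dimensional linear subspace of $\mathbb{P}^c$ spanned by $i+1$ linearly independent points of $\Gamma$ contains exactly $\nu(i,\Gamma)$ points of $\Gamma$. A finite set $\Gamma'$ is $3$-regular if it is $3$-regular in the sense of Castelnuovo–Mumford, i.e. $H^1(\mathbb{P}^c, \mathcal{I}_{\Gamma'}(2)) = 0$; equivalently, $\Gamma'$ imposes independent conditions on quadrics, i.e. for each $p \in \Gamma'$ there is a quadric hypersurface containing $\Gamma' \setminus \{p\}$ but not $p$. *)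

(* Defs.v *)
From HB Require Import structures.
From mathcomp Require Import all_boot all_order all_algebra.
Set Implicit Arguments. Unset Strict Implicit. Unset Printing Implicit Defensive.
Import GRing.Theory.
Local Open Scope ring_scope.

(* Points of P^c are represented by nonzero row vectors in K^(c+1);
   a finite set of d points is a family G : 'I_d -> 'rV[K]_(c.+1) of nonzero
   vectors, pairwise non-proportional (distinct projective points). *)

Section Defs.
Variables (K : fieldType) (n d : nat).
Implicit Types (G : 'I_d -> 'rV[K]_n) (S : {set 'I_d}).

Definition proj_points G : Prop :=
  (forall i, G i != 0) /\ (forall i j, (G i == G j)%MS -> i = j).

Definition span_pts G S : 'M[K]_n := (\sum_(i in S) <<G i>>)%MS.

Definition spans_all G S : Prop := \rank (span_pts G S) = n.

Definition lin_indep_pts G S : Prop := \rank (span_pts G S) = #|S|.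

(* linear semi-uniform position in P^c, with n = c + 1 *)
Definition semi_uniform G : Prop :=
  spans_all G setT /\
  exists nu : nat -> nat, forall i : nat, (i < n)%N ->
    forall S, #|S| = i.+1 -> lin_indep_pts G S ->
      #|[set j | (G j <= span_pts G S)%MS]| = nu i.

(* value of the quadratic form x |-> x Q x^T (every homogeneous quadric
   polynomial in n variables is of this form) *)
Definition qform (Q : 'M[K]_n) (v : 'rV[K]_n) : K := (v *m Q *m v^T) 0 0.

(* 3-regularity: the points impose independent conditions on quadrics *)
Definition three_regular G S : Prop :=
  forall p, p \in S -> exists Q : 'M[K]_n,
    (forall q, q \in S -> q != p -> qform Q (G q) = 0) /\ qform Q (G p) != 0.

End Defs.

(* Main.v *)
Require Import Defs.
From HB Require Import structures.
From mathcomp Require Import all_boot all_order all_algebra.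
From mathcomp Require Import zify.
Set Implicit Arguments. Unset Strict Implicit. Unset Printing Implicit Defensive.
Import GRing.Theory.
Local Open Scope ring_scope.

Section Arith.
Local Open Scope nat_scope.
Variables (N : nat -> nat) (n : nat).
Hypothesis H0 : N 0 = 0.
Hypothesis Hinc : forall j, j < n -> N j < N j.+1.
Hypothesis Hconv : forall j, j.+2 <= n -> 2 * N j.+1 <= N j.+2 + N j.

Lemma A1 j : j <= n -> j <= N j.
Proof.
elim: j => // j IH Hj; have := Hinc Hj; have := IH (ltnW Hj); lia.
Qed.

Lemma A2 r : r < n -> N r.+1 <= N r + 1 -> N r <= r.
Proof.
elim: r => [|r IH] Hr H; first by rewrite H0.
have := Hconv Hr; have := IH (ltnW Hr); lia.
Qed.

Lemma A3 s t : 2 <= s -> s + t <= n -> s.+1 <= N s -> 2 * (s + t) + 1 <= N (s + t) + s.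
Proof.
move=> s2; elim: t => [|t IH] Ht Hs; first by rewrite addn0; lia.
rewrite addnS in Ht *.
have IH' := IH (ltnW Ht) Hs.
have := Hinc Ht; have := @A2 (s + t) Ht.
case: (leqP (N (s + t).+1) (N (s + t) + 1)) => [h|h]; lia.
Qed.

Lemma ar_a r : r < n -> N r.+1 - N r < minn (N r.+1) (2 * r + 1) - minn (N r) (2 * r - 1) -> False.
Proof.
move=> Hr; have := Hinc Hr; have := @A2 r Hr; have := A1 (ltnW Hr).
case: (leqP (N r.+1) (N r + 1)) => h; lia.
Qed.

Lemma ar_b r s : r < n -> 2 <= s -> s <= r.+1 -> s.+1 <= N s ->
  s < minn (N r.+1) (2 * r + 1) - minn (N r) (2 * r - 1) -> False.
Proof.
move=> Hr s2 sr Hs; have := A1 (ltnW Hr).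
case: (leqP s r) => sr'.
  have := @A3 s (r - s) s2; rewrite subnKC //; move=> /(_ (ltnW Hr) Hs); lia.
lia.
Qed.
End Arith.

Section Work.
Variables (K : fieldType) (n d : nat) (G : 'I_d -> 'rV[K]_n).

Local Notation sp := (span_pts G).
Definition pts (S : {set 'I_d}) := [set j | (G j <= sp S)%MS].
Definition rk (S : {set 'I_d}) := \rank (sp S).

Lemma sp_subP (S : {set 'I_d}) m (M : 'M_(m,n)) :
  reflect (forall i, i \in S -> (G i <= M)%MS) (sp S <= M)%MS.
Proof.
apply: (iffP sumsmx_subP) => H i iS.
  by rewrite -(genmxE (G i)); apply: H.
by rewrite genmxE; apply: H.
Qed.

Lemma sp_sub i (S : {set 'I_d}) : i \in S -> (G i <= sp S)%MS.
Proof. by move=> iS; apply: (sumsmx_sup i) => //; rewrite genmxE. Qed.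

Lemma sp_mono (S T : {set 'I_d}) : S \subset T -> (sp S <= sp T)%MS.
Proof. by move=> /subsetP ST; apply/sp_subP => i /ST; apply: sp_sub. Qed.

Lemma sp0 : sp set0 = 0.
Proof. by rewrite /span_pts big_set0. Qed.

Lemma rk0 : rk set0 = 0%N.
Proof. by rewrite /rk sp0 mxrank0. Qed.

Lemma spU (S T : {set 'I_d}) : (sp (S :|: T) == sp S + sp T)%MS.
Proof.
apply/andP; split.
  apply/sp_subP => i; rewrite inE => /orP[] iS.
    by apply: submx_trans (addsmxSl _ _); apply: sp_sub.
  by apply: submx_trans (addsmxSr _ _); apply: sp_sub.
by rewrite addsmx_sub !sp_mono // ?subsetUl ?subsetUr.
Qed.

Lemma sp1 i : (sp [set i] == G i)%MS.
Proof.
apply/andP; split; last by apply: sp_sub; rewrite inE.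
by apply/sp_subP => j; rewrite inE => /eqP->.
Qed.

Lemma rk1 i : (rk [set i] <= 1)%N.
Proof. by rewrite /rk (eqmx_rank (sp1 i)) rank_leq_row. Qed.

Lemma rkU (S T : {set 'I_d}) : (rk (S :|: T) <= rk S + rk T)%N.
Proof. by rewrite /rk (eqmx_rank (spU S T)) mxrank_adds_leqif. Qed.

Lemma rk_le (S : {set 'I_d}) : (rk S <= #|S|)%N.
Proof.
have [k Hk] : exists k, (#|S| <= k)%N by exists #|S|.
elim: k S Hk => [|k IH] S Hk.
  by move: Hk; rewrite leqn0 => /eqP/cards0_eq->; rewrite rk0.
case: (set_0Vmem S) => [->|[i iS]]; first by rewrite rk0.
have -> : S = [set i] :|: (S :\ i) by rewrite setD1K.
apply: leq_trans (rkU _ _) _.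
rewrite cardsU1 !inE eqxx /= add1n (leq_add (rk1 i)) //.
by apply: IH; rewrite (cardsD1 i S) iS in Hk.
Qed.

Definition indep (S : {set 'I_d}) := rk S = #|S|.

Lemma sp_sub_pts (S T : {set 'I_d}) : S \subset pts T -> (sp S <= sp T)%MS.
Proof. by move=> /subsetP H; apply/sp_subP => i /H; rewrite inE. Qed.

Lemma pts_mono (S T : {set 'I_d}) : S \subset T -> pts S \subset pts T.
Proof.
move=> ST; apply/subsetP => j; rewrite !inE => H.
by apply: submx_trans H (sp_mono ST).
Qed.

Lemma sub_pts (S : {set 'I_d}) : S \subset pts S.
Proof. by apply/subsetP => j jS; rewrite inE sp_sub. Qed.

Lemma rk_mono (S T : {set 'I_d}) : S \subset T -> (rk S <= rk T)%N.
Proof. by move=> ST; apply: mxrankS; apply: sp_mono. Qed.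

Lemma rk_pts (S T : {set 'I_d}) : S \subset pts T -> (rk S <= rk T)%N.
Proof. by move=> ST; apply: mxrankS; apply: sp_sub_pts. Qed.

Lemma rk_ltn (S T : {set 'I_d}) x : (sp S <= sp T)%MS -> x \in T ->
  ~~ (G x <= sp S)%MS -> (rk S < rk T)%N.
Proof.
move=> sub xT nx; rewrite ltn_neqAle (mxrank_leqif_sup sub).2 mxrankS // andbT.
apply: contra nx => H; apply: submx_trans H; exact: sp_sub.
Qed.

Lemma indepU1 (S : {set 'I_d}) x : indep S -> ~~ (G x <= sp S)%MS -> indep (x |: S).
Proof.
move=> iS nx; have xS : x \notin S by apply: contra nx => /sp_sub.
rewrite /indep cardsU1 xS add1n; apply/eqP; rewrite eqn_leq.
move: (rk_le (x |: S)); rewrite cardsU1 xS add1n => ->.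
by rewrite -iS (rk_ltn _ (setU11 x S) nx) // sp_mono // subsetUr.
Qed.

Lemma indep_sub (S T : {set 'I_d}) : indep S -> T \subset S -> indep T.
Proof.
move=> iS TS; apply/eqP; rewrite eqn_leq rk_le /=.
have h : (rk S <= rk T + #|S :\: T|)%N.
  have e : T :|: (S :\: T) = S.
    apply/setP => x; rewrite !inE; case: (boolP (x \in T)) => //= xT.
    by rewrite (subsetP TS).
  rewrite -{1}e; apply: leq_trans (rkU _ _) _.
  by rewrite leq_add2l rk_le.
by rewrite iS -(cardsID T S) (setIidPr TS) leq_add2r in h.
Qed.

Lemma indep_out (S : {set 'I_d}) x : indep S -> x \in S -> ~~ (G x <= sp (S :\ x))%MS.
Proof.
move=> iS xS; apply/negP => H.
have : (rk S <= rk (S :\ x))%N.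
  apply: mxrankS; apply/sp_subP => j jS.
  case: (eqVneq j x) => [->//|jx]; apply: sp_sub; by rewrite !inE jx.
rewrite iS; move: (rk_le (S :\ x)); rewrite (cardsD1 x S) xS add1n => h1 h2.
by move: (leq_trans h2 h1); rewrite ltnn.
Qed.

Definition lf (w : 'cV[K]_n) (v : 'rV[K]_n) : K := (v *m w) 0 0.

Lemma lfD w u v : lf w (u + v) = lf w u + lf w v.
Proof. by rewrite /lf mulmxDl mxE. Qed.

Lemma lfZ w a v : lf w (a *: v) = a * lf w v.
Proof. by rewrite /lf -scalemxAl mxE. Qed.

Definition sep (S : 'M[K]_n) (v : 'rV[K]_n) : 'cV[K]_n :=
  match [pick j | (v *m cokermx S) 0 j != 0] with
  | Some j => cokermx S *m delta_mx j 0
  | None => 0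
  end.

Lemma sep0 S v u : (u <= S)%MS -> lf (sep S v) u = 0.
Proof.
rewrite submxE => /eqP H; rewrite /sep; case: pickP => [j _|_].
  by rewrite /lf mulmxA H mul0mx mxE.
by rewrite /lf mulmx0 mxE.
Qed.

Lemma sep_nz S v : ~~ (v <= S)%MS -> lf (sep S v) v != 0.
Proof.
rewrite submxE => H; rewrite /sep; case: pickP => [j Hj|H0].
  by rewrite /lf mulmxA -colE mxE.
case/negP: H; apply/eqP/matrixP => i j; rewrite ord1.
by move: (H0 j) => /= /negbFE/eqP ->; rewrite mxE.
Qed.

Lemma qformD (Q1 Q2 : 'M[K]_n) v : qform (Q1 + Q2) v = qform Q1 v + qform Q2 v.
Proof. by rewrite /qform mulmxDr mulmxDl mxE. Qed.

Lemma qform0 v : qform (0 : 'M[K]_n) v = 0.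
Proof. by rewrite /qform mulmx0 mul0mx mxE. Qed.

Lemma qformZ a (Q : 'M[K]_n) v : qform (a *: Q) v = a * qform Q v.
Proof. by rewrite /qform -scalemxAr -scalemxAl mxE. Qed.

Lemma qform_sum (I : finType) (P : pred I) (F : I -> 'M[K]_n) v :
  qform (\sum_(i | P i) F i) v = \sum_(i | P i) qform (F i) v.
Proof.
apply: (big_morph (fun Q => qform Q v)); [by move=> x y; rewrite qformD | exact: qform0].
Qed.


Lemma qform_prod (w1 w2 : 'cV[K]_n) v : qform (w1 *m w2^T) v = lf w1 v * lf w2 v.
Proof.
rewrite /qform /lf mulmxA -(mulmxA (v *m w1)) -trmx_mul mxE big_ord1.
by congr (_ * _); rewrite [LHS]mxE.
Qed.

Lemma ext3 (Zu Z0 : {set 'I_d}) (h : 'cV[K]_n) :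
  (forall q, q \in Zu -> lf h (G q) = 0) ->
  (forall z, z \in Z0 -> lf h (G z) != 0) ->
  three_regular G Zu -> indep Z0 -> three_regular G (Zu :|: Z0).
Proof.
move=> h0 hnz tZu iZ0 p; rewrite inE => /orP[pU|p0].
  have [Q [Qv Qp]] := tZu p pU.
  pose w z := sep (sp (Z0 :\ z)) (G z).
  pose c z := - qform Q (G z) / (lf h (G z) * lf (w z) (G z)).
  have wnz z : z \in Z0 -> lf (w z) (G z) != 0.
    by move=> zZ; apply: sep_nz; apply: indep_out.
  have w0 z q : z \in Z0 -> q \in Z0 -> q != z -> lf (w z) (G q) = 0.
    by move=> zZ qZ qz; apply: sep0; apply: sp_sub; rewrite !inE qz.
  have E q : qform (Q + \sum_(z in Z0) c z *: (h *m (w z)^T)) (G q) =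
      qform Q (G q) + \sum_(z in Z0) c z * (lf h (G q) * lf (w z) (G q)).
    rewrite qformD qform_sum; congr (_ + _); apply: eq_bigr => z _.
    by rewrite qformZ qform_prod.
  exists (Q + \sum_(z in Z0) c z *: (h *m (w z)^T)); split.
    move=> q; rewrite inE => /orP[qU|q0] qp; rewrite E.
      by rewrite big1 ?addr0 ?Qv // => z _; rewrite h0 // mul0r mulr0.
    rewrite (bigD1 q) //= big1 ?addr0; last first.
      by move=> z /andP[zZ zq]; rewrite w0 // 1?eq_sym // !mulr0.
    rewrite /c -mulrA mulVf ?mulr1 ?addrN //.
    by rewrite mulf_neq0 // ?hnz // wnz.
  by rewrite E big1 ?addr0 // => z _; rewrite h0 // mul0r mulr0.
pose w := sep (sp (Z0 :\ p)) (G p).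
exists (h *m w^T); split.
  move=> q; rewrite inE => /orP[qU|q0] qp; rewrite qform_prod.
    by rewrite h0 // mul0r.
  by rewrite sep0 ?mulr0 //; apply: sp_sub; rewrite !inE qp.
rewrite qform_prod mulf_neq0 ?hnz //.
by apply: sep_nz; apply: indep_out.
Qed.

Lemma sp_split (I : {set 'I_d}) a : a \in I -> (sp I <= G a + sp (I :\ a))%MS.
Proof.
move=> aI; apply/sp_subP => j jI; case: (eqVneq j a) => [->|ja].
  exact: addsmxSl.
by apply: submx_trans (addsmxSr _ _); apply: sp_sub; rewrite !inE ja.
Qed.

Lemma h_nz (I : {set 'I_d}) a z : a \in I -> ~~ (G a <= sp (I :\ a))%MS ->
  (G z <= sp I)%MS -> ~~ (G z <= sp (I :\ a))%MS ->
  lf (sep (sp (I :\ a)) (G a)) (G z) != 0.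
Proof.
move=> aI na zI nz.
have /sub_addsmxP[[u1 u2] /= E] := submx_trans zI (sp_split aI).
have H2 : (u2 *m sp (I :\ a) <= sp (I :\ a))%MS by apply: submxMl.
rewrite E lfD (sep0 _ H2) addr0 (mx11_scalar u1) mul_scalar_mx lfZ.
rewrite mulf_neq0 ?sep_nz //; apply: contra nz => /eqP u0.
by rewrite E (mx11_scalar u1) u0 mul_scalar_mx scale0r add0r.
Qed.

Lemma indep0 : indep set0.
Proof. by rewrite /indep rk0 cards0. Qed.

Lemma greedy (X : {set 'I_d}) (k : nat) : exists J : {set 'I_d}, [/\ J \subset X, indep J &
  (#|J| = k \/ ((#|J| < k)%N /\ X \subset pts J))].
Proof.
elim: k => [|k [J [JX iJ [eqk|[ltk sub]]]]].
- by exists set0; split; [exact: sub0set | exact: indep0 | left; rewrite cards0].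
- case: (boolP (X \subset pts J)) => sub.
    by exists J; split => //; right; rewrite eqk ltnSn.
  have /subsetPn [y yX ny] := sub.
  have nyJ : y \notin J by apply: contra ny; apply/subsetP/sub_pts.
  exists (y |: J); split.
  + by rewrite subUset sub1set yX.
  + by apply: indepU1 => //; rewrite inE in ny.
  + by left; rewrite cardsU1 nyJ eqk.
- by exists J; split => //; right; split => //; apply: ltnW.
Qed.

Hypothesis Gnz : forall i, G i != 0.
Hypothesis Ginj : forall i j, (G i == G j)%MS -> i = j.
Hypothesis Hfull : rk setT = n.
Variable N : nat -> nat.
Hypothesis HN : forall J, indep J -> #|pts J| = N #|J|.

Lemma pts0 : pts set0 = set0.
Proof.
by apply/setP => j; rewrite !inE sp0 submx0 (negbTE (Gnz j)).
Qed.

Lemma N0 : N 0 = 0%N.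
Proof. by have := HN indep0; rewrite pts0 !cards0 => h; rewrite -h. Qed.

Lemma rk_n (S : {set 'I_d}) : (rk S <= n)%N.
Proof. exact: rank_leq_col. Qed.

Lemma exists_indep k : (k <= n)%N -> exists J, indep J /\ #|J| = k.
Proof.
move=> kn; have [J [_ iJ [eqk|[ltk sub]]]] := greedy setT k; first by exists J.
have := rk_pts sub; rewrite Hfull iJ => h.
lia.
Qed.

Lemma N1 : (1 <= n)%N -> N 1 = 1%N.
Proof.
move=> n1; have [J [iJ cJ]] := exists_indep n1.
move/eqP: cJ => /cards1P [j Jj].
have := HN iJ; rewrite Jj cards1 => <-.
apply/eqP/cards1P; exists j; apply/setP => i.
rewrite !inE; apply/idP/idP => [H|/eqP->]; last by apply: sp_sub; rewrite inE.
have H1 : (G i <= G j)%MS by apply: submx_trans H _; case/andP: (sp1 j).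
apply/eqP/Ginj; rewrite -(mxrank_leqif_eq H1).2 !rank_rV !Gnz.
by [].
Qed.

Lemma Ninc j : (j < n)%N -> (N j < N j.+1)%N.
Proof.
move=> jn; have [I [iI cI]] := exists_indep jn.
have [I0|[a aI]] := set_0Vmem I; first by rewrite I0 cards0 in cI.
have iU : indep (I :\ a) by apply: indep_sub iI (subD1set I a).
have cU : #|I :\ a| = j by rewrite (cardsD1 a I) aI add1n in cI; case: cI.
rewrite -cI -(HN iI) -cU -(HN iU); apply: proper_card; apply/properP; split.
  by apply: pts_mono; apply: subD1set.
exists a; first by rewrite inE; apply: sp_sub.
by rewrite inE; apply: indep_out.
Qed.

Lemma Nconv j : (j.+2 <= n)%N -> (2 * N j.+1 <= N j.+2 + N j)%N.
Proof.
move=> jn; have [I [iI cI]] := exists_indep jn.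
have [I0|[a aI]] := set_0Vmem I; first by rewrite I0 cards0 in cI.
have cIa : #|I :\ a| = j.+1 by rewrite (cardsD1 a I) aI add1n in cI; case: cI.
have [I0|[x xI]] := set_0Vmem (I :\ a); first by rewrite I0 cards0 in cIa.
have cA : #|I :\ a :\ x| = j by rewrite (cardsD1 x (I :\ a)) xI add1n in cIa; case: cIa.
move: (xI); rewrite !inE => /andP[xa xI'].
have cIx : #|I :\ x| = j.+1 by rewrite (cardsD1 x I) xI' add1n in cI; case: cI.
have AW : I :\ a :\ x \subset I :\ x by apply/subsetP => y; rewrite !inE => /and3P[-> _ ->].
have AU : I :\ a :\ x \subset I :\ a by apply: subD1set.
have iW : indep (I :\ x) by apply: indep_sub iI (subD1set I x).
have iU : indep (I :\ a) by apply: indep_sub iI (subD1set I a).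
have iA : indep (I :\ a :\ x) by apply: indep_sub iU AU.
have WU : (I :\ x) :|: (I :\ a) = I.
  apply/setP => y; rewrite !inE; case: (eqVneq y x) => [->|yx] /=; first by rewrite xa.
  by case: (y \in I); rewrite /= ?andbF.
have cap : (sp (I :\ x) :&: sp (I :\ a) <= sp (I :\ a :\ x))%MS.
  have sub : (sp (I :\ a :\ x) <= sp (I :\ x) :&: sp (I :\ a))%MS.
    by rewrite sub_capmx !sp_mono.
  rewrite -(mxrank_leqif_sup sub).2; apply/eqP.
  have := mxrank_sum_cap (sp (I :\ x)) (sp (I :\ a)).
  rewrite -(eqmx_rank (spU _ _)) WU.
  move: iI iW iU iA; rewrite /indep /rk => -> -> -> ->.
  rewrite cI cIx cIa cA; lia.
have sI : pts (I :\ x) :|: pts (I :\ a) \subset pts I.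
  by rewrite subUset !pts_mono ?subD1set.
have sA : pts (I :\ x) :&: pts (I :\ a) \subset pts (I :\ a :\ x).
  apply/subsetP => y; rewrite !inE => /andP[h1 h2].
  by apply: submx_trans cap; rewrite sub_capmx h1 h2.
have := cardsUI (pts (I :\ x)) (pts (I :\ a)).
have := subset_leq_card sI; have := subset_leq_card sA.
rewrite (HN iI) (HN iW) (HN iU) (HN iA) cI cIx cIa cA; lia.
Qed.

Lemma main r : (r <= n)%N -> forall I, indep I -> #|I| = r ->
  exists Z : {set 'I_d}, [/\ Z \subset pts I, three_regular G Z, rk Z = r &
                #|Z| = minn (N r) (2 * r - 1)].
Proof.
elim: r => [|r IH] rn I iI cI.
  exists set0; split.
  - exact: sub0set.
  - by move=> p; rewrite inE.
  - exact: rk0.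
  - by rewrite cards0 N0.
have [I0|[a aI]] := set_0Vmem I; first by rewrite I0 cards0 in cI.
pose U := I :\ a.
have iU : indep U by apply: indep_sub iI (subD1set I a).
have cU : #|U| = r by rewrite (cardsD1 a I) aI add1n in cI; case: cI.
have [Zu [ZuU tZu rZu cZu]] := IH (ltnW rn) U iU cU.
have naU : ~~ (G a <= sp U)%MS by apply: indep_out.
have UI : pts U \subset pts I by apply: pts_mono; apply: subD1set.
pose X := pts I :\: pts U.
have XI : X \subset pts I by apply: subsetDl.
pose k := (minn (N r.+1) (2 * r.+1 - 1) - minn (N r) (2 * r - 1))%N.
have inc := Ninc rn.
have [J [JX iJ [cJ|[ltk sub]]]] := greedy X k; last first.
  exfalso.
  have HNI := HN iI; have HNU := HN iU; rewrite cI in HNI; rewrite cU in HNU.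
  case: (boolP (X \subset J)) => XJ.
    have eJ : J = X by apply/eqP; rewrite eqEsubset JX XJ.
    have cX : #|X| = (N r.+1 - N r)%N.
      by rewrite cardsD (setIidPr UI) HNI HNU.
    apply: (@ar_a N n _ _ _ r rn) => //; [exact: N0 | exact: Ninc | exact: Nconv |].
    move: ltk; rewrite /k eJ cX => h; lia.
  have /subsetPn [y yX nyJ] := XJ.
  have yJ : y \in pts J by apply: (subsetP sub).
  have HNJ := HN iJ.
  have cpJ : (#|J|.+1 <= N #|J|)%N.
    have e : #|y |: J| = #|J|.+1 by rewrite cardsU1 nyJ.
    rewrite -HNJ -e; apply: subset_leq_card.
    by rewrite subUset sub1set yJ sub_pts.
  have s2 : (2 <= #|J|)%N.
    case: #|J| cpJ => [|[|s]] //; first by rewrite N0.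
    by rewrite N1 // (leq_trans _ rn).
  have sr : (#|J| <= r.+1)%N.
    by rewrite -iJ -cI -iI; apply: rk_pts; apply: subset_trans JX XI.
  apply: (@ar_b N n _ _ _ r #|J| rn) => //; [exact: N0 | exact: Ninc | exact: Nconv |].
  by move: ltk; rewrite /k mulnS; lia.
have JU : forall z, z \in J -> ~~ (G z <= sp U)%MS.
  move=> z /(subsetP JX); rewrite !inE => /andP[h _]; exact: h.
have JI : forall z, z \in J -> (G z <= sp I)%MS.
  move=> z /(subsetP JX); rewrite !inE => /andP[_ h]; exact: h.
have kpos : (0 < k)%N by rewrite /k mulnS; lia.
have [J0|[z zJ]] := set_0Vmem J; first by rewrite J0 cards0 in cJ; rewrite -cJ in kpos.
exists (Zu :|: J); split.
- by rewrite subUset (subset_trans ZuU UI) (subset_trans JX XI).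
- apply: (@ext3 Zu J (sep (sp U) (G a))) => //.
  + move=> q qZ; apply: sep0; have := subsetP ZuU q qZ; by rewrite inE.
  + by move=> q qJ; apply: h_nz => //; [apply: JI | apply: JU].
- apply/eqP; rewrite eqn_leq; apply/andP; split.
    rewrite -cI -iI; apply: rk_pts; by rewrite subUset (subset_trans ZuU UI) (subset_trans JX XI).
  rewrite -rZu; apply: (@rk_ltn _ _ z).
  + by apply: sp_mono; apply: subsetUl.
  + by rewrite inE zJ orbT.
  + apply: contra (JU z zJ) => h; apply: submx_trans h _; exact: sp_sub_pts.
- have dis : Zu :&: J = set0.
    apply/setP => q; rewrite !inE; apply/negP => /andP[qZ qJ].
    have := JU q qJ; have := subsetP ZuU q qZ; rewrite inE => ->; by [].
  rewrite cardsU dis cards0 subn0 cZu cJ /k; rewrite mulnS; lia.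
Qed.
End Work.

Theorem proposition2p1 (K : closedFieldType) (c d : nat)
    (G : 'I_d -> 'rV[K]_(c.+1)) :
  (1 <= c)%N -> (2 * c + 1 <= d)%N ->
  proj_points G -> semi_uniform G ->
  exists S : {set 'I_d},
    #|S| = (2 * c + 1)%N /\ spans_all G S /\ three_regular G S.
Proof.
move=> c1 hd [Gnz Ginj] [Hfull [nu Hnu]].
pose N k := if k is k'.+1 then nu k' else 0%N.
have HN : forall J, indep G J -> #|pts G J| = N #|J|.
  move=> J iJ; case e: #|J| => [|k].
    by move/cards0_eq: e => ->; rewrite (pts0 Gnz) cards0.
  have kn : (k < c.+1)%N by rewrite -ltnS -e -iJ ltnS rk_n.
  by apply: (Hnu k kn J e iJ).
have [I [iI cI]] := exists_indep Hfull (leqnn c.+1).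
have [Z [ZI tZ rZ cZ]] := main Gnz Ginj Hfull HN (leqnn _) iI cI.
exists Z; split; last by split.
have ptsI : pts G I = setT.
  apply/setP => j; rewrite !inE; apply: submx_full.
  by rewrite /row_full; apply/eqP; move: iI; rewrite /indep cI.
have Nd : N c.+1 = d by rewrite -cI -(HN I iI) ptsI cardsT card_ord.
by rewrite cZ Nd; lia.
Qed.
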